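(* Let ${\mathbf B}_1$ and ${\mathbf B}_2$ be two real symmetric $3\times3$ matrices. If ${\mathbf B}_1+t{\mathbf B}_2$ has a multiple eigenvalue for every real number $t$, then ${\mathbf B}_1$ and ${\mathbf B}_2$ can be diagonalized by the same orthogonal matrix. *)

(* Defs.v *)
From mathcomp Require Import all_boot all_order all_algebra.
From mathcomp Require Import reals.
Set Implicit Arguments. Unset Strict Implicit. Unset Printing Implicit Defensive.
Import Order.TTheory GRing.Theory Num.Theory.
Local Open Scope ring_scope.

Definition symmetric_mx (R : realType) n (A : 'M[R]_n) : Prop := A^T = A.

Definition orthogonal_mx (R : realType) n (Q : 'M[R]_n) : Prop := Q *m Q^T = 1%:M.

Definition has_multiple_eigenvalue (R : realType) n (A : 'M[R]_n) : Prop :=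
  exists a : R, (('X - a%:P) ^+ 2 %| char_poly A)%R.

(* Main.v *)
Require Import Defs.
From mathcomp Require Import all_boot all_order all_algebra.
From mathcomp Require Import reals.
From mathcomp Require Import ring lra zify.
Set Implicit Arguments. Unset Strict Implicit. Unset Printing Implicit Defensive.
Import Order.TTheory GRing.Theory Num.Theory.
Local Open Scope ring_scope.

Definition i0 : 'I_3 := @Ordinal 3 0 isT.
Definition i1 : 'I_3 := @Ordinal 3 1 isT.
Definition i2 : 'I_3 := @Ordinal 3 2 isT.

Lemma ord3P (i : 'I_3) : i = i0 \/ i = i1 \/ i = i2.
Proof.
case: i => [[|[|[|m]]] Hm].
- by left; apply: val_inj.
- by right; left; apply: val_inj.
- by right; right; apply: val_inj.
- by [].
Qed.

Lemma sum3 (V : nmodType) (F : 'I_3 -> V) : \sum_(k < 3) F k = F i0 + F i1 + F i2.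
Proof.
rewrite !big_ord_recl big_ord0 addr0 addrA.
by congr (F _ + F _ + F _); apply: val_inj.
Qed.

Section S.
Variable R : comNzRingType.
Definition ix (n : nat) : 'I_3 := match n with 0 => i0 | 1 => i1 | _ => i2 end.
Definition ent (A : 'M[R]_3) (i j : nat) := A (ix i) (ix j).
Lemma ixK (i : 'I_3) : ix i = i.
Proof. by case: (ord3P i) => [->|[->|->]]. Qed.
Lemma entE (A : 'M[R]_3) (i j : 'I_3) : A i j = ent A i j.
Proof. by rewrite /ent !ixK. Qed.

Lemma det3 (A : 'M[R]_3) : \det A =
  ent A 0 0 * ent A 1 1 * ent A 2 2 - ent A 0 0 * ent A 1 2 * ent A 2 1
 - ent A 0 1 * ent A 1 0 * ent A 2 2 + ent A 0 1 * ent A 1 2 * ent A 2 0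
 + ent A 0 2 * ent A 1 0 * ent A 2 1 - ent A 0 2 * ent A 1 1 * ent A 2 0.
Proof.
rewrite (expand_det_row _ i0) sum3 /cofactor.
rewrite !(expand_det_row _ ord0) !big_ord_recl !big_ord0 /cofactor !det_mx11 !mxE.
rewrite !entE /=.
ring.
Qed.
End S.

Definition rk1 (R : comNzRingType) (N : 'M[R]_3) := forall i j k l, N i k * N j l = N i l * N j k.

Lemma eval_char (R : comNzRingType) (M : 'M[R]_3) x : (char_poly M).[x] = \det (x%:M - M).
Proof.
rewrite /char_poly -[_.[x]]/(horner_eval x _) -det_map_mx; congr (\det _).
apply/matrixP => i j; rewrite !mxE; apply: (@etrans _ _ ((('X *+ (i == j) - (M i j)%:P)).[x])); first by []. by rewrite hornerD hornerN hornerMn hornerX hornerC.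
Qed.

Lemma sos6 (R : realType) (a b c d e f : R) :
  a ^+ 2 + b ^+ 2 + c ^+ 2 + 2 * (d ^+ 2 + e ^+ 2 + f ^+ 2) = 0 ->
  a = 0 /\ b = 0 /\ c = 0 /\ d = 0 /\ e = 0 /\ f = 0.
Proof.
move=> h.
have := sqr_ge0 a; have := sqr_ge0 b; have := sqr_ge0 c;
have := sqr_ge0 d; have := sqr_ge0 e; have := sqr_ge0 f => hf he hd hc hb ha.
have z x : x ^+ 2 = 0 -> x = 0 :> R by move/eqP; rewrite sqrf_eq0 => /eqP.
by do ![split|]; apply: z; lra.
Qed.


Section HH.
Variable R : realType.

Definition v3 (a b c : R) (i : 'I_3) : R := match val i with 0 => a | 1 => b | _ => c end.
Definition hh (a b c : R) : 'M[R]_3 :=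
  \matrix_(i, j) ((i == j)%:R - 2 / (a ^+ 2 + b ^+ 2 + c ^+ 2) * v3 a b c i * v3 a b c j).

Lemma hh_orth a b c : a ^+ 2 + b ^+ 2 + c ^+ 2 != 0 -> orthogonal_mx (hh a b c).
Proof.
move=> nz; rewrite /orthogonal_mx; apply/matrixP => i j.
rewrite !mxE sum3 !mxE.
case: (ord3P i) => [->|[->|->]]; case: (ord3P j) => [->|[->|->]]; rewrite /= /v3 /=; field; exact: nz.
Qed.

Lemma HH (v : 'cV[R]_3) : v != 0 ->
  exists Q : 'M[R]_3, exists c : R, orthogonal_mx Q /\ c != 0 /\ Q *m delta_mx 0 0 = c *: v.
Proof.
move=> vnz.
have vE i : v i 0 = v3 (v i0 0) (v i1 0) (v i2 0) i.
  by case: (ord3P i) => [->|[->|->]].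
set x := v i0 0; set y := v i1 0; set z := v i2 0.
have [/andP [/eqP y0 /eqP z0] | yz] := boolP ((y == 0) && (z == 0)).
  have x0 : x != 0.
    apply/eqP => x0; move/eqP: vnz; apply; apply/matrixP => i j; rewrite (ord1 j) !mxE vE.
    by case: (ord3P i) => [->|[->|->]]; rewrite /v3 /=.
  exists 1%:M, x^-1; split; first by rewrite /orthogonal_mx trmx1 mul1mx.
  split; first by rewrite invr_eq0.
  rewrite mul1mx; apply/matrixP => i j; rewrite (ord1 j) !mxE vE.
  by case: (ord3P i) => [->|[->|->]]; rewrite /v3 /= -/x -/y -/z ?y0 ?z0 ?mulr0 ?(mulVf x0).
have yz2 : 0 < y ^+ 2 + z ^+ 2.
  rewrite negb_and in yz; case/orP: yz => h.
    by apply: ltr_pwDl; [rewrite exprn_even_gt0 //= h | exact: sqr_ge0].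
  by rewrite addrC; apply: ltr_pwDl; [rewrite exprn_even_gt0 //= h | exact: sqr_ge0].
set s := x ^+ 2 + y ^+ 2 + z ^+ 2.
have s0 : 0 < s by rewrite /s -addrA; apply: ltr_wpDl => //; exact: sqr_ge0.
set r := Num.sqrt s.
have r0 : 0 < r by rewrite sqrtr_gt0.
have r2 : r ^+ 2 = s by rewrite sqr_sqrtr // ltW.
have nz : (x - r) ^+ 2 + y ^+ 2 + z ^+ 2 != 0.
  rewrite -addrA; apply/lt0r_neq0; apply: ltr_wpDl => //; exact: sqr_ge0.
have hn : (x - r) ^+ 2 + y ^+ 2 + z ^+ 2 = 2 * r * (r - x).
  transitivity (s - 2 * x * r + r ^+ 2); first by rewrite /s; ring.
  by rewrite -{1}r2; ring.
have rx : r - x != 0.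
  apply/eqP => h; move: nz; rewrite hn h mulr0 eqxx //.
exists (hh (x - r) y z), r^-1; split; first exact: hh_orth.
split; first by rewrite invr_eq0 lt0r_neq0.
apply/matrixP => i j; rewrite (ord1 j) !mxE sum3 !mxE vE.
case: (ord3P i) => [->|[->|->]]; rewrite /v3 /= -/x -/y -/z hn; field; by rewrite rx andbT lt0r_neq0.
Qed.
End HH.

Lemma orthoTQ (R : realType) (Q : 'M[R]_3) : orthogonal_mx Q -> Q^T *m Q = 1%:M.
Proof. exact: mulmx1C. Qed.

Lemma L2 (R : realType) (N : 'M[R]_3) : symmetric_mx N -> rk1 N ->
  exists Q : 'M[R]_3, exists g : R, orthogonal_mx Q /\ Q^T *m N *m Q = g *: delta_mx 0 0.
Proof.
move=> sN rk.
have sy i j : N i j = N j i by rewrite -{1}sN mxE.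
have [/existsP [k nk] | allz] := boolP [exists k, N k k != 0]; last first.
  have N0 : N = 0.
    apply/matrixP => i j; rewrite mxE.
    have := rk i j i j; rewrite (sy j i).
    move: allz; rewrite negb_exists => /forallP allz.
    rewrite (eqP (negPn (allz i))) (eqP (negPn (allz j))) mul0r => /esym/eqP.
    by rewrite mulf_eq0 orbb => /eqP.
  exists 1%:M, 0; split; first by rewrite /orthogonal_mx trmx1 mul1mx.
  by rewrite N0 mulmx0 mul0mx scale0r.
set v := col k N.
have vnz : v != 0.
  by apply/eqP => /matrixP /(_ k 0); rewrite !mxE; apply/eqP.
have [Q [c [oQ [c0 Qe]]]] := HH vnz.
have Nf : N = (N k k)^-1 *: (v *m v^T).
  apply/matrixP => i j; rewrite !mxE big_ord1 !mxE.
  have := rk i k j k; rewrite (sy k j) => h.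
  by rewrite -h; field.
have Qv : Q^T *m v = c^-1 *: delta_mx 0 0.
  have -> : v = c^-1 *: (Q *m delta_mx 0 0) by rewrite Qe scalerA mulVf // scale1r.
  by rewrite -scalemxAr mulmxA orthoTQ // mul1mx.
exists Q, ((N k k)^-1 * (c^-1 * c^-1)); split => //.
have E : Q^T *m (v *m v^T) *m Q = (Q^T *m v) *m (Q^T *m v)^T.
  by rewrite trmx_mul trmxK !mulmxA.
rewrite [in LHS]Nf -scalemxAr -scalemxAl E Qv.
rewrite linearZ /= trmx_delta -scalemxAr -scalemxAl mul_delta_mx.
by rewrite !scalerA.
Qed.
Lemma L1 (R : realType) (M : 'M[R]_3) : symmetric_mx M -> has_multiple_eigenvalue M ->
  exists a, rk1 (M - a%:M).
Proof.
move=> sM [a /dvdpP [q Hq]]; exists a.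
have sq : size q = 2%N.
  have := size_char_poly M; rewrite Hq size_mul ?size_exp_XsubC.
  - by rewrite addn3 => -[].
  - apply/eqP => q0; move: Hq; rewrite q0 mul0r => h.
    by have := size_char_poly M; rewrite h size_poly0.
  - by rewrite expf_neq0 // polyXsubC_eq0.
have ev x : \det (x%:M - M) = (q`_0 + q`_1 * x) * (x - a) ^+ 2.
  rewrite -eval_char Hq hornerM horner_exp hornerXsubC horner_coef sq.
  by rewrite !big_ord_recl big_ord0 /= expr0 expr1 mulr1 addr0.
have sy i j : M i j = M j i by rewrite -{1}sM mxE.
set x00 := M i0 i0 - a; set x11 := M i1 i1 - a; set x22 := M i2 i2 - a.
set x01 := M i0 i1; set x02 := M i0 i2; set x12 := M i1 i2.
set e1 := x00 + x11 + x22.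
set e2 := x00 * x11 + x00 * x22 + x11 * x22 - x01 ^+ 2 - x02 ^+ 2 - x12 ^+ 2.
set e3 := x00 * x11 * x22 + 2 * x01 * x12 * x02 - x00 * x12 ^+ 2 - x11 * x02 ^+ 2 - x22 * x01 ^+ 2.
set K := q`_0 + q`_1 * a.
have ev' y : y ^+ 3 - e1 * y ^+ 2 + e2 * y - e3 = (K + q`_1 * y) * y ^+ 2.
  transitivity (\det ((y + a)%:M - M)); last by rewrite ev /K; ring.
  rewrite det3 /ent !mxE /= (sy i1 i0) (sy i2 i0) (sy i2 i1) /e1 /e2 /e3 /x00 /x11 /x22 /x01 /x02 /x12.
  ring.
have := ev' 0; have := ev' 1; have := ev' (-1); have := ev' 2.
move=> h3 h2 h1 h0.
have e3z : e3 = 0 by lra.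
have e2z : e2 = 0 by lra.
have sos : (x00 * x11 - x01 ^+ 2) ^+ 2 + (x00 * x22 - x02 ^+ 2) ^+ 2 + (x11 * x22 - x12 ^+ 2) ^+ 2
   + 2 * ((x00 * x12 - x02 * x01) ^+ 2 + (x01 * x12 - x02 * x11) ^+ 2 + (x01 * x22 - x02 * x12) ^+ 2) = 0.
  transitivity (e2 ^+ 2 - 2 * e1 * e3); last by rewrite e2z e3z; ring.
  rewrite /e1 /e2 /e3; ring.
have [p1 [p2 [p3 [o1 [o2 o3]]]]] := sos6 sos.
move=> i j k l.
case: (ord3P i) => [->|[->|->]]; case: (ord3P j) => [->|[->|->]];
case: (ord3P k) => [->|[->|->]]; case: (ord3P l) => [->|[->|->]];
rewrite !mxE /= ?mulr1n ?mulr0n ?subr0 ?(sy i1 i0) ?(sy i2 i0) ?(sy i2 i1) -/x00 -/x11 -/x22 -/x01 -/x02 -/x12; lra.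
Qed.
Section Key.
Variable R : realType.
Definition mc (p q r s u w g l : R) :=
  (s - l) * (w - l) = u ^+ 2 /\ (g + p - l) * (s - l) = q ^+ 2 /\
  (g + p - l) * (w - l) = r ^+ 2 /\ (g + p - l) * u = q * r /\
  q * u = r * (s - l) /\ q * (w - l) = r * u.

Lemma cancel_same (a b c : R) : c != 0 -> a * c = b * c -> a = b.
Proof. by move=> c0 /eqP; rewrite -subr_eq0 -mulrBl mulf_eq0 (negPf c0) orbF subr_eq0 => /eqP. Qed.

Lemma key p q r s u w g1 g2 g3 l1 l2 l3 :
  g1 != g2 -> g1 != g3 -> g2 != g3 ->
  mc p q r s u w g1 l1 -> mc p q r s u w g2 l2 -> mc p q r s u w g3 l3 ->
  q = 0 /\ r = 0 /\ u = 0.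
Proof.
move=> d12 d13 d23 [a1 [b1 [c1 [d1 [e1 f1]]]]] [a2 [b2 [c2 [d2 [e2 f2]]]]] [a3 [b3 [c3 [d3 [e3 f3]]]]].
have u0 : u = 0.
  apply/eqP/negP => /negP un.
  have u2 : u ^+ 2 != 0 by rewrite sqrf_eq0.
  have Sn l : (s - l) * (w - l) = u ^+ 2 -> s - l != 0.
    by move=> h; apply/eqP => h0; move: u2; rewrite -h h0 mul0r eqxx.
  have pig g g' l l' : g != g' -> (s - l) * (w - l) = u ^+ 2 ->
      (g + p - l) * (s - l) = q ^+ 2 -> (g' + p - l') * (s - l') = q ^+ 2 -> l != l'.
    move=> dg h hA hA'; apply/eqP => ll; subst l'.
    have := cancel_same (Sn _ h) (etrans hA (esym hA')) => e.
    by move/eqP: dg; apply; lra.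
  have n12 := pig _ _ _ _ d12 a1 b1 b2.
  have n13 := pig _ _ _ _ d13 a1 b1 b3.
  have n23 := pig _ _ _ _ d23 a2 b2 b3.
  have s12 : l1 + l2 = s + w.
    apply: (@cancel_same _ _ (l1 - l2)); first by rewrite subr_eq0.
    have h : (s - l1) * (w - l1) = (s - l2) * (w - l2) by rewrite a1 a2.
    apply/eqP; rewrite -subr_eq0; apply/eqP.
    transitivity ((s - l1) * (w - l1) - (s - l2) * (w - l2)); first by ring.
    by rewrite h subrr.
  have s13 : l1 + l3 = s + w.
    apply: (@cancel_same _ _ (l1 - l3)); first by rewrite subr_eq0.
    have h : (s - l1) * (w - l1) = (s - l3) * (w - l3) by rewrite a1 a3.
    apply/eqP; rewrite -subr_eq0; apply/eqP.
    transitivity ((s - l1) * (w - l1) - (s - l3) * (w - l3)); first by ring.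
    by rewrite h subrr.
  by move/eqP: n23; apply; lra.
subst u.
have q0 : q = 0.
  apply/eqP/negP => /negP qn.
  have W1 : w - l1 = 0 by apply: (@cancel_same _ _ q) => //; rewrite mulrC f1; ring.
  have W2 : w - l2 = 0 by apply: (@cancel_same _ _ q) => //; rewrite mulrC f2; ring.
  have l21 : l2 = l1 by lra.
  rewrite l21 in b2.
  have sw : s - l1 != 0.
    by apply/eqP => h; move: b1; rewrite h mulr0 => /esym/eqP; rewrite sqrf_eq0 (negPf qn).
  have := cancel_same sw (etrans b1 (esym b2)).
  by move=> h; move/eqP: d12; apply; lra.
have r0 : r = 0.
  apply/eqP/negP => /negP rn.
  have S1 : s - l1 = 0 by apply: (@cancel_same _ _ r) => //; rewrite mulrC -e1; ring.
  have S2 : s - l2 = 0 by apply: (@cancel_same _ _ r) => //; rewrite mulrC -e2; ring.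
  have ww : w - l1 != 0.
    by apply/eqP => h; move: c1; rewrite h mulr0 => /esym/eqP; rewrite sqrf_eq0 (negPf rn).
  have l21 : l2 = l1 by lra.
  rewrite l21 in c2.
  have := cancel_same ww (etrans c1 (esym c2)).
  by move=> h; move/eqP: d12; apply; lra.
by [].
Qed.
End Key.

Lemma char_conj (R : comNzRingType) n (Q M : 'M[R]_n) : Q^T *m Q = 1%:M ->
  char_poly (Q^T *m M *m Q) = char_poly M.
Proof.
move=> QQ; rewrite /char_poly /char_poly_mx.
have eX : ('X%:M : 'M_n) = map_mx polyC Q^T *m 'X%:M *m map_mx polyC Q.
  by rewrite mul_mx_scalar -scalemxAl -map_mxM QQ map_mx1 scalemx1.
rewrite !map_mxM {1}eX -mulmxBl -mulmxBr !det_mulmx mulrAC -det_mulmx -map_mxM QQ map_mx1 det1 mul1r.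
by [].
Qed.

Lemma hme_conj (R : realType) (Q M : 'M[R]_3) : orthogonal_mx Q ->
  has_multiple_eigenvalue M -> has_multiple_eigenvalue (Q^T *m M *m Q).
Proof. by move=> oQ; rewrite /has_multiple_eigenvalue char_conj // orthoTQ. Qed.

Lemma conj_shift (R : realType) (Q M : 'M[R]_3) c : orthogonal_mx Q ->
  Q^T *m (M - c%:M) *m Q = Q^T *m M *m Q - c%:M.
Proof. by move=> oQ; rewrite mulmxBr mulmxBl mul_mx_scalar -scalemxAl orthoTQ // scalemx1. Qed.

Lemma diag_form (R : realType) (a g : R) : is_diag_mx (a%:M + g *: delta_mx 0 0 : 'M[R]_3).
Proof.
apply/is_diag_mxP => i j nij; rewrite !mxE.
have -> : (i == j) = false by apply/negbTE; apply: contra nij => /eqP ->.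
case: (i == 0) / eqP => [ei|]; case: (j == 0) / eqP => [ej|] //=; rewrite ?mulr0 ?addr0 //.
by move: nij; rewrite ei ej eqxx.
Qed.

Lemma mc_of (R : realType) (p q r s u w a0 g t l : R) : t != 0 ->
  (a0 + t * s - l) * (a0 + t * w - l) = (t * u) * (t * u) ->
  (a0 + g + t * p - l) * (a0 + t * s - l) = (t * q) * (t * q) ->
  (a0 + g + t * p - l) * (a0 + t * w - l) = (t * r) * (t * r) ->
  (a0 + g + t * p - l) * (t * u) = (t * r) * (t * q) ->
  (t * q) * (t * u) = (t * r) * (a0 + t * s - l) ->
  (t * q) * (a0 + t * w - l) = (t * r) * (t * u) ->
  mc p q r s u w (g / t) ((l - a0) / t).
Proof.
move=> tnz h1 h2 h3 h4 h5 h6.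
have fin (L1 L2 M1 M2 : R) : L1 = L2 -> M1 * t ^+ 2 = L1 -> M2 * t ^+ 2 = L2 -> M1 = M2.
  move=> e e1 e2; apply: (@cancel_same R _ _ (t ^+ 2)); first by rewrite expf_neq0.
  by rewrite e1 e2.
rewrite /mc; do ![split].
- by apply: (fin _ _ _ _ h1); field.
- by apply: (fin _ _ _ _ h2); field.
- by apply: (fin _ _ _ _ h3); field.
- by apply: (fin _ _ _ _ h4); field.
- by apply: (fin _ _ _ _ h5); field.
- by apply: (fin _ _ _ _ h6); field.
Qed.

Unset Implicit Arguments.
Set Strict Implicit.

Theorem lemma4p1 (R : realType) (B1 B2 : 'M[R]_3) :
  symmetric_mx B1 -> symmetric_mx B2 ->
  (forall t : R, has_multiple_eigenvalue (B1 + t *: B2)) ->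
  exists Q : 'M[R]_3, orthogonal_mx Q /\
    is_diag_mx (Q^T *m B1 *m Q) /\ is_diag_mx (Q^T *m B2 *m Q).
Proof.
move=> sB1 sB2 H.
have symS (M : 'M[R]_3) c : symmetric_mx M -> symmetric_mx (M - c%:M).
  by rewrite /symmetric_mx => sM; rewrite linearB /= tr_scalar_mx sM.
have H0 : has_multiple_eigenvalue B1 by have := H 0; rewrite scale0r addr0.
have [a0 rk0] := L1 sB1 H0.
have [Q1 [g [oQ1 E1]]] := L2 (symS _ a0 sB1) rk0.
set B2' := Q1^T *m B2 *m Q1.
have B1' : Q1^T *m B1 *m Q1 = a0%:M + g *: delta_mx 0 0.
  by rewrite -E1 conj_shift // [RHS]addrC subrK.
have sB2' : symmetric_mx B2'.
  by rewrite /symmetric_mx /B2' !trmx_mul trmxK sB2 mulmxA.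
have sy i j : B2' i j = B2' j i by rewrite -{1}sB2' mxE.
have H' t : has_multiple_eigenvalue (a0%:M + g *: delta_mx 0 0 + t *: B2').
  have := hme_conj oQ1 (H t).
  by rewrite mulmxDr mulmxDl B1' -scalemxAr -scalemxAl.
have symF (c t : R) : symmetric_mx (c%:M + g *: delta_mx 0 0 + t *: B2' : 'M[R]_3).
  by rewrite /symmetric_mx !linearD !linearZ /= tr_scalar_mx trmx_delta sB2'.
have [g0|gnz] := eqVneq g 0.
  have [b rkb] := L1 (symF a0 1) (H' 1).
  have eb : a0%:M + g *: delta_mx 0 0 + 1 *: B2' - b%:M = B2' - (b - a0)%:M.
    apply/matrixP => i j; rewrite !mxE g0 mul0r addr0 mul1r.
    by case: (i == j); rewrite /= ?mulr1n ?mulr0n; ring.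
  rewrite eb in rkb.
  have [Q2 [g2 [oQ2 E2]]] := L2 (symS _ _ sB2') rkb.
  exists (Q1 *m Q2); split.
    by rewrite /orthogonal_mx trmx_mul mulmxA -(mulmxA Q1) oQ2 mulmx1 oQ1.
  have cj (B : 'M[R]_3) : (Q1 *m Q2)^T *m B *m (Q1 *m Q2) = Q2^T *m (Q1^T *m B *m Q1) *m Q2.
    by rewrite trmx_mul !mulmxA.
  rewrite !cj B1' g0 scale0r addr0 -/B2'; split.
    rewrite mul_mx_scalar -scalemxAl orthoTQ // scalemx1.
    by rewrite -[X in is_diag_mx X]addr0 -(scale0r (delta_mx 0 0 : 'M[R]_3)) diag_form.
  have e : Q2^T *m B2' *m Q2 = (b - a0)%:M + g2 *: delta_mx 0 0.
    by rewrite -E2 conj_shift // [RHS]addrC subrK.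
  by rewrite e diag_form.
have B2E : Q1^T *m B2 *m Q1 = B2' by [].
clearbody B2'.
have eq_ring (A B A' B' : R) : A' = B' -> A = A' -> B = B' -> A = B by move=> h -> ->.
have mct (t : R) : t != 0 -> exists l,
    mc (B2' i0 i0) (B2' i0 i1) (B2' i0 i2) (B2' i1 i1) (B2' i1 i2) (B2' i2 i2) (g / t) ((l - a0) / t).
  move=> tnz; have [l rk] := L1 (symF a0 t) (H' t); exists l.
  apply: mc_of => //.
  - by have := rk i1 i2 i1 i2; rewrite !mxE /= (sy i2 i1) => h; apply: (eq_ring _ _ _ _ h); ring.
  - by have := rk i0 i1 i0 i1; rewrite !mxE /= (sy i1 i0) => h; apply: (eq_ring _ _ _ _ h); ring.
  - by have := rk i0 i2 i0 i2; rewrite !mxE /= (sy i2 i0) => h; apply: (eq_ring _ _ _ _ h); ring.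
  - by have := rk i0 i1 i0 i2; rewrite !mxE /= (sy i1 i0) => h; apply: (eq_ring _ _ _ _ h); ring.
  - by have := rk i0 i1 i1 i2; rewrite !mxE /= => h; apply: (eq_ring _ _ _ _ h); ring.
  - by have := rk i0 i2 i1 i2; rewrite !mxE /= (sy i2 i1) => h; apply: (eq_ring _ _ _ _ h); ring.
have [l1 m1] := mct 1 (oner_neq0 _).
have [l2 m2] := mct 2 (lt0r_neq0 (ltr0Sn _ 1)).
have [l3 m3] := mct 3 (lt0r_neq0 (ltr0Sn _ 2)).
have d12 : g / 1 != g / 2 by apply/eqP => h; move/eqP: gnz; apply; lra.
have d13 : g / 1 != g / 3 by apply/eqP => h; move/eqP: gnz; apply; lra.
have d23 : g / 2 != g / 3 by apply/eqP => h; move/eqP: gnz; apply; lra.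
have [q0 [r0 u0]] := key d12 d13 d23 m1 m2 m3.
exists Q1; split => //; split; first by rewrite B1' diag_form.
rewrite B2E; apply/is_diag_mxP => i j nij.
case: (ord3P i) => [ei|[ei|ei]]; case: (ord3P j) => [ej|[ej|ej]]; rewrite ei ej in nij *;
  rewrite ?q0 ?r0 ?u0 //; rewrite sy ?q0 ?r0 ?u0 //.
Qed.
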